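(* Let $\mathcal C$ be a clique of $\Gamma$ with $|\mathcal C|\ge 4$ which contains a linear $3$-clique (three elliptic ovoids belonging to a common rosette). Then $\mathcal C$ is a linear clique. In particular, a linear clique and a non-linear clique of $\Gamma$ share at most two vertices.
   Context: Let $q=2^n$ and let $Q_0\cong Q(4,q)$ be the parabolic quadric generalized quadrangle in $\mathrm{PG}(4,q)$. An elliptic ovoid of $Q_0$ is a set $X=S\cap Q_0$ where $S$ is a $3$-dimensional projective subspace meeting $Q_0$ in an elliptic quadric $Q^-(3,q)$. Two distinct elliptic ovoids meet in one point (then they are tangent) or in a conic. A rosette based at $p\in Q_0$ is a set of $q$ elliptic ovoids pairwise meeting exactly in $\{p\}$. $\Gamma$ is the graph whose vertices are the elliptic ovoids of $Q_0$, adjacent iff distinct and tangent. A clique of $\Gamma$ is linear if it is contained in some rosette (i.e. all its members pairwise meet in the same point), and non-linear otherwise. *)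

(* Defs.v *)
From HB Require Import structures.
From mathcomp Require Import all_boot all_order all_algebra all_field.
Set Implicit Arguments. Unset Strict Implicit. Unset Printing Implicit Defensive.
Import GRing.Theory.
Local Open Scope ring_scope.

Section Q4q.
Variable F : finFieldType.

(* Vectors of F^5 represent points of PG(4,q) (nonzero, up to scalars). *)
Definition Qf (x : 'rV[F]_5) : F :=
  x 0 (inord 0) * x 0 (inord 1) + x 0 (inord 2) * x 0 (inord 3) + x 0 (inord 4) ^+ 2.

Definition ppoint (p : 'rV[F]_5) : {set 'rV[F]_5} :=
  [set x | (x != 0) && [exists k : F, x == k *: p]].

(* The hyperplane S = ker a meets Q0 in an elliptic quadric Q^-(3,q):
   the restriction of Qf to S is, in a suitable basis of S and up to a
   nonzero scalar, the standard elliptic form v0 v1 + v2^2 + c v2 v3 + d v3^2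
   with t^2 + c t + d irreducible over F. *)
Definition elliptic_section (a : 'rV[F]_5) : Prop :=
  exists M : 'M[F]_(4, 5),
    [/\ row_free M, M *m a^T = 0 &
    exists lam c d : F, [/\ lam != 0, (forall t : F, t ^+ 2 + c * t + d != 0) &
      forall v : 'rV[F]_4,
        Qf (v *m M) = lam * (v 0 (inord 0) * v 0 (inord 1) + v 0 (inord 2) ^+ 2
                             + c * v 0 (inord 2) * v 0 (inord 3) + d * v 0 (inord 3) ^+ 2)]].

Definition section (a : 'rV[F]_5) : {set 'rV[F]_5} :=
  [set x | [&& x != 0, Qf x == 0 & (x *m a^T) 0 0 == 0]].

Definition elliptic_ovoid (X : {set 'rV[F]_5}) : Prop :=
  exists a : 'rV[F]_5, [/\ a != 0, elliptic_section a & X = section a].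

(* Adjacency in Gamma: distinct and tangent (meeting in exactly one point). *)
Definition tangent (X Y : {set 'rV[F]_5}) : Prop :=
  X != Y /\ exists p : 'rV[F]_5, p != 0 /\ X :&: Y = ppoint p.

Definition clique (C : {set {set 'rV[F]_5}}) : Prop :=
  (forall X, X \in C -> elliptic_ovoid X) /\
  (forall X Y, X \in C -> Y \in C -> X != Y -> tangent X Y).

Definition linear_clique (C : {set {set 'rV[F]_5}}) : Prop :=
  clique C /\ exists p : 'rV[F]_5, p != 0 /\
    (forall X Y, X \in C -> Y \in C -> X != Y -> X :&: Y = ppoint p).

End Q4q.

(* Main.v *)
Require Import Defs.
From HB Require Import structures.
From mathcomp Require Import all_boot all_order all_algebra all_field.
From mathcomp Require Import ring.
Set Implicit Arguments. Unset Strict Implicit. Unset Printing Implicit Defensive.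
Import GRing.Theory.
Local Open Scope ring_scope.

Lemma char2 (F : finFieldType) n : #|F| = (2 ^ n)%N -> 2 = 0 :> F.
Proof. by move=> h; apply: (pcharf0 (card_finPcharP h (isT : prime 2))). Qed.

Lemma sqrt_ex (F : finFieldType) n : #|F| = (2 ^ n)%N -> forall z : F, exists s, s ^+ 2 = z.
Proof.
move=> h z; have n0 : (0 < n)%N.
  case: n h => // h; have := finNzRing_gt1 F; by rewrite h.
exists (z ^+ (2 ^ n.-1)); rewrite -exprM -expnSr prednK // -h.
exact: expf_card.
Qed.

Definition co (F : finFieldType) (x : 'rV[F]_5) (i : nat) := x 0 (inord i).

Lemma sum5 (R : nmodType) (f : 'I_5 -> R) : \sum_(i<5) f i =
  f (inord 0) + f (inord 1) + f (inord 2) + f (inord 3) + f (inord 4).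
Proof.
rewrite !big_ord_recr big_ord0 /=. rewrite add0r.
by congr (_ + _ + _ + _ + _); congr f; apply: val_inj; rewrite /= inordK.
Qed.

Lemma dotE (F : finFieldType) (x a : 'rV[F]_5) : (x *m a^T) 0 0 =
  co x 0 * co a 0 + co x 1 * co a 1 + co x 2 * co a 2 + co x 3 * co a 3 + co x 4 * co a 4.
Proof. by rewrite !mxE sum5 /co !mxE. Qed.

Lemma eq5 (F : finFieldType) (x y : 'rV[F]_5) :
  co x 0 = co y 0 -> co x 1 = co y 1 -> co x 2 = co y 2 -> co x 3 = co y 3 -> co x 4 = co y 4 -> x = y.
Proof.
move=> h0 h1 h2 h3 h4; apply/rowP => j.
have e : j = inord (val j) by apply: val_inj; rewrite /= inordK.
rewrite e; case: j e => [[|[|[|[|[|k]]]]] Hk] _ //=.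
Qed.

Definition mk5 (F : finFieldType) (c0 c1 c2 c3 c4 : F) : 'rV[F]_5 :=
  \row_(i < 5) nth 0 [:: c0; c1; c2; c3; c4] i.

Lemma co_mk5 (F : finFieldType) (c0 c1 c2 c3 c4 : F) :
  [/\ co (mk5 c0 c1 c2 c3 c4) 0 = c0, co (mk5 c0 c1 c2 c3 c4) 1 = c1,
      co (mk5 c0 c1 c2 c3 c4) 2 = c2, co (mk5 c0 c1 c2 c3 c4) 3 = c3 &
      co (mk5 c0 c1 c2 c3 c4) 4 = c4].
Proof. by rewrite /co !mxE !inordK. Qed.

Lemma coD (F : finFieldType) (x y : 'rV[F]_5) i : co (x + y) i = co x i + co y i.
Proof. by rewrite /co mxE. Qed.
Lemma coZ (F : finFieldType) (k : F) (x : 'rV[F]_5) i : co (k *: x) i = k * co x i.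
Proof. by rewrite /co mxE. Qed.
Lemma coN (F : finFieldType) (x : 'rV[F]_5) i : co (- x) i = - co x i.
Proof. by rewrite /co mxE. Qed.
Lemma co0 (F : finFieldType) i : co (0 : 'rV[F]_5) i = 0.
Proof. by rewrite /co mxE. Qed.

Lemma QfE (F : finFieldType) (x : 'rV[F]_5) :
  Qf x = co x 0 * co x 1 + co x 2 * co x 3 + co x 4 ^+ 2.
Proof. by []. Qed.

Definition L (F : finFieldType) (a x : 'rV[F]_5) :=
  co a 0 * co x 0 + co a 1 * co x 1 + co a 2 * co x 2 + co a 3 * co x 3.

Lemma opp2 (F : finFieldType) (h2 : 2 = 0 :> F) (x : F) : - x = x.
Proof. by apply/eqP; rewrite -subr_eq0 -opprD -mulr2n -mulr_natl h2 mul0r oppr0. Qed.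

Lemma eq2 (F : finFieldType) (h2 : 2 = 0 :> F) (a b : F) : a = b <-> a + b = 0.
Proof.
split => [->|e]; first by rewrite -mulr2n -mulr_natl h2 mul0r.
by apply/eqP; rewrite -subr_eq0 (opp2 h2) e.
Qed.

Lemma c2W (F : finFieldType) (h2 : 2 = 0 :> F) (W A : F) : A = 2 * W -> A = 0.
Proof. by move=> ->; rewrite h2 mul0r. Qed.

Lemma secE (F : finFieldType) (h2 : 2 = 0 :> F) (a x : 'rV[F]_5) : co a 4 = 1 ->
  (x \in section a) = [&& x != 0, Qf x == 0 & co x 4 == L a x].
Proof.
move=> ha; rewrite inE dotE /L; congr (_ && (_ && _)).
apply/eqP/eqP => e.
- by apply/(eq2 h2); rewrite -e ha; ring.
- by rewrite ha e mulr1; ring: h2.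
Qed.

Lemma ppointE (F : finFieldType) (p x : 'rV[F]_5) :
  (x \in ppoint p) = (x != 0) && [exists k, x == k *: p].
Proof. by rewrite inE. Qed.

Lemma dotL (F : finFieldType) (h2 : 2 = 0 :> F) (a x : 'rV[F]_5) : co a 4 = 1 ->
  ((x *m a^T) 0 0 == 0) = (co x 4 == L a x).
Proof.
move=> ha; rewrite dotE /L.
apply/eqP/eqP => e.
- by apply/(eq2 h2); rewrite -e ha; ring.
- by rewrite ha e mulr1; ring: h2.
Qed.

Lemma inspan (F : finFieldType) (p y : 'rV[F]_5) (k c : F) :
  ((k *: p + c *: y)%R <= col_mx p y)%MS.
Proof.
apply/submxP; exists (row_mx (k%:M : 'M_1) (c%:M : 'M_1)).
by rewrite mul_row_col !mul_scalar_mx.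
Qed.

Definition yv (F : finFieldType) (a b : 'rV[F]_5) :=
  mk5 (co a 1 + co b 1) (co a 0 + co b 0) (co a 3 + co b 3) (co a 2 + co b 2)
    (co a 0 * (co a 1 + co b 1) + co a 1 * (co a 0 + co b 0) +
     co a 2 * (co a 3 + co b 3) + co a 3 * (co a 2 + co b 2)).

Lemma yvE (F : finFieldType) (a b : 'rV[F]_5) :
  [/\ co (yv a b) 0 = co a 1 + co b 1, co (yv a b) 1 = co a 0 + co b 0,
      co (yv a b) 2 = co a 3 + co b 3, co (yv a b) 3 = co a 2 + co b 2 &
      co (yv a b) 4 = co a 0 * (co a 1 + co b 1) + co a 1 * (co a 0 + co b 0) +
     co a 2 * (co a 3 + co b 3) + co a 3 * (co a 2 + co b 2)].
Proof. exact: co_mk5. Qed.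

From mathcomp Require Import zify.

Lemma tangent_pt (F : finFieldType) (h2 : 2 = 0 :> F)
  (hsq : forall z : F, exists s, s ^+ 2 = z) (a b p : 'rV[F]_5) :
  co a 4 = 1 -> co b 4 = 1 -> section a != section b ->
  section a :&: section b = ppoint p -> yv a b \in section a :&: section b.
Proof.
move=> ha hb hab hint.
set y := yv a b; have [y0 y1 y2 y3 y4] := yvE a b; rewrite -/y in y0 y1 y2 y3 y4.
have yn0 : y != 0.
  apply/negP => /eqP y00; move/negP: hab; apply; apply/eqP; congr section.
  have c0 i : co y i = 0 by rewrite y00 co0.
  apply: eq5.
  - by apply/(eq2 h2); rewrite -y1; exact: c0.
  - by apply/(eq2 h2); rewrite -y0; exact: c0.
  - by apply/(eq2 h2); rewrite -y3; exact: c0.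
  - by apply/(eq2 h2); rewrite -y2; exact: c0.
  - by rewrite ha hb.
have ya : co y 4 = L a y by rewrite /L y0 y1 y2 y3 y4.
have yb : co y 4 = L b y.
  by apply/(eq2 h2); rewrite /L y0 y1 y2 y3 y4; ring: h2.
suff hQ : Qf y = 0 by rewrite inE !(secE h2) // yn0 hQ -ya -yb !eqxx.
apply/eqP; apply/negP => /negP hQ.
pose A := row_mx a^T b^T; pose K := kermx A; pose S := col_mx p y.
have : ~~ (K <= S)%MS.
  apply/negP => sub; have := mxrankS sub; rewrite mxrank_ker.
  have r1 := rank_leq_col A; have r2 := rank_leq_row S; lia.
case/row_subPn => i Hi; set x := row i K in Hi.
have xA : x *m A = 0 by rewrite /x -row_mul mulmx_ker row0.
have [xa xb] : co x 4 = L a x /\ co x 4 = L b x.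
  move: xA; rewrite mul_mx_row => /eqP; rewrite row_mx_eq0 => /andP[/eqP ea /eqP eb].
  by split; apply/eqP; rewrite -(dotL h2) // ?ea ?eb mxE.
have [t ht] := hsq (Qf x / Qf y).
pose z := x + t *: y.
have za : co z 4 = L a z.
  by rewrite /L !coD !coZ xa ya /L; ring.
have zb : co z 4 = L b z.
  by rewrite /L !coD !coZ xb yb /L; ring.
have Bxy : co x 0 * co y 1 + co x 1 * co y 0 + co x 2 * co y 3 + co x 3 * co y 2 = 0.
  have -> : co x 0 * co y 1 + co x 1 * co y 0 + co x 2 * co y 3 + co x 3 * co y 2
     = L a x + L b x by rewrite /L y0 y1 y2 y3; ring.
  by rewrite -xa -xb; ring: h2.
have Qz : Qf z = 0.
  have -> : Qf z = Qf x + t ^+ 2 * Qf y + t * (co x 0 * co y 1 + co x 1 * co y 0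
     + co x 2 * co y 3 + co x 3 * co y 2).
    by apply/(eq2 h2); rewrite !QfE !coD !coZ; ring: h2.
  by rewrite Bxy mulr0 addr0 ht divfK // ; ring: h2.
have zn0 : z != 0.
  apply/negP => /eqP z0; move/negP: Hi; apply.
  have -> : x = (0 *: p + (- t) *: y)%R.
    by apply/eqP; rewrite scale0r add0r scaleNr -subr_eq0 opprK -/z z0.
  exact: inspan.
have : z \in section a :&: section b.
  by rewrite inE !(secE h2) // zn0 Qz -za -zb !eqxx.
rewrite hint ppointE => /andP[_ /existsP[k /eqP zk]].
move/negP: Hi; apply.
have -> : x = (k *: p + (- t) *: y)%R.
  by rewrite -zk /z scaleNr addrK.
exact: inspan.
Qed.

Lemma sectionZ (F : finFieldType) (k : F) (a : 'rV[F]_5) : k != 0 ->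
  section (k *: a) = section a.
Proof.
move=> kn0; apply/setP => x; rewrite !inE.
have -> : (x *m (k *: a)^T) 0 0 = k * (x *m a^T) 0 0.
  by rewrite !dotE !coZ; ring.
by rewrite mulf_eq0 (negbTE kn0).
Qed.

Definition co4 (F : finFieldType) (x : 'rV[F]_4) (i : nat) := x 0 (inord i).

Definition ek (F : finFieldType) (k : nat) : 'rV[F]_4 := \row_(i < 4) (if val i == k then 1 else 0).

Lemma co4_ek (F : finFieldType) (k j : nat) : (j < 4)%N -> co4 (ek F k) j = if j == k then 1 else 0.
Proof. by move=> hj; rewrite /co4 mxE /= inordK. Qed.

Lemma co4D (F : finFieldType) (x y : 'rV[F]_4) i : co4 (x + y) i = co4 x i + co4 y i.
Proof. by rewrite /co4 mxE. Qed.

Lemma co40 (F : finFieldType) i : co4 (0 : 'rV[F]_4) i = 0.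
Proof. by rewrite /co4 mxE. Qed.

Lemma eq4 (F : finFieldType) (x y : 'rV[F]_4) :
  co4 x 0 = co4 y 0 -> co4 x 1 = co4 y 1 -> co4 x 2 = co4 y 2 -> co4 x 3 = co4 y 3 -> x = y.
Proof.
move=> h0 h1 h2 h3; apply/rowP => j.
have e : j = inord (val j) by apply: val_inj; rewrite /= inordK.
by rewrite e; case: j e => [[|[|[|[|k]]]] Hk] _ //=.
Qed.

Lemma ell_a4 (F : finFieldType) (h2 : 2 = 0 :> F)
  (hsq : forall z : F, exists s, s ^+ 2 = z) (a : 'rV[F]_5) :
  a != 0 -> elliptic_section a -> co a 4 != 0.
Proof.
move=> an0 [M [rfM Ma [lam [c [d [lamn0 irr hf]]]]]].
apply/negP => /eqP a40.
pose e4 : 'rV[F]_5 := mk5 0 0 0 0 1.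
have [e0 e1 e2 e3 e4'] := co_mk5 (0 : F) 0 0 0 1; rewrite -/e4 in e0 e1 e2 e3 e4'.
have e4a : e4 *m a^T = 0.
  apply/matrixP => i j; rewrite !ord1 dotE e0 e1 e2 e3 a40 mxE; ring.
have rA : \rank a^T = 1%N by rewrite mxrank_tr rank_rV an0.
have sub1 : (M <= kermx a^T)%MS by apply/sub_kermxP.
have sub2 : (kermx a^T <= M)%MS.
  have := mxrank_leqif_sup sub1; rewrite mxrank_ker rA (eqP rfM) => -[_ <-] //.
have : (e4 <= M)%MS by apply: submx_trans sub2; apply/sub_kermxP.
case/submxP => v ev.
have cn0 : c != 0.
  apply/negP => /eqP c0; have [t ht] := hsq d; move: (irr t); rewrite c0 ht.
  by rewrite mul0r addr0 -mulr2n -mulr_natl h2 mul0r eqxx.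
pose E (w : 'rV[F]_4) := co4 w 0 * co4 w 1 + co4 w 2 ^+ 2 + c * co4 w 2 * co4 w 3
   + d * co4 w 3 ^+ 2.
have hE w : Qf (w *m M) = lam * E w by rewrite hf.
have P w : co4 v 0 * co4 w 1 + co4 v 1 * co4 w 0 + c * (co4 v 2 * co4 w 3 + co4 v 3 * co4 w 2) = 0.
  have h1 : Qf ((v + w) *m M) = Qf (w *m M) + 1.
    rewrite mulmxDl -ev; set u := w *m M.
    by apply/(eq2 h2); rewrite !QfE !coD e0 e1 e2 e3 e4'; ring: h2.
  have h0 : Qf (v *m M) = 1 by rewrite -ev QfE e0 e1 e2 e3 e4'; ring.
  rewrite !hE in h1 h0.
  have : lam * E (v + w) + lam * E v + lam * E w = 0 by rewrite h1 h0; ring: h2.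
  rewrite -!mulrDr.
  move/eqP; rewrite mulf_eq0 (negbTE lamn0) /= => /eqP.
  have -> : E (v + w) + E v + E w = co4 v 0 * co4 w 1 + co4 v 1 * co4 w 0 +
    c * (co4 v 2 * co4 w 3 + co4 v 3 * co4 w 2) + 2 * (co4 v 0 * co4 v 1 + co4 w 0 * co4 w 1
    + c * co4 v 2 * co4 v 3 + c * co4 w 2 * co4 w 3 + co4 v 2 ^+ 2 + co4 v 2 * co4 w 2
    + co4 w 2 ^+ 2 + d * (co4 v 3 ^+ 2 + co4 v 3 * co4 w 3 + co4 w 3 ^+ 2)).
    by rewrite /E !co4D; ring.
  by rewrite h2 mul0r addr0.
have vn0 : v != 0.
  apply/negP => /eqP v0; move: e4'; rewrite ev v0 mul0mx co0 => /eqP.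
  by rewrite eq_sym oner_eq0.
move/negP: vn0; apply; apply/eqP; apply: eq4; rewrite co40.
- have := P (ek F 1); rewrite !co4_ek //=.
  by rewrite !(mulr1, mulr0, addr0, add0r).
- have := P (ek F 0); rewrite !co4_ek //=.
  by rewrite !(mulr1, mulr0, addr0, add0r).
- have := P (ek F 3); rewrite !co4_ek //=.
  rewrite !(mulr1, mulr0, addr0, add0r).
  by move/eqP; rewrite mulf_eq0 (negbTE cn0) => /eqP.
- have := P (ek F 2); rewrite !co4_ek //=.
  rewrite !(mulr1, mulr0, addr0, add0r).
  by move/eqP; rewrite mulf_eq0 (negbTE cn0) => /eqP.
Qed.

Lemma norm_ov (F : finFieldType) (h2 : 2 = 0 :> F)
  (hsq : forall z : F, exists s, s ^+ 2 = z) (X : {set 'rV[F]_5}) :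
  elliptic_ovoid X -> exists a, co a 4 = 1 /\ X = section a.
Proof.
case=> a [an0 ell ->]; have a4 := ell_a4 h2 hsq an0 ell.
exists ((co a 4)^-1 *: a); split; first by rewrite coZ mulVf.
by rewrite sectionZ // invr_neq0.
Qed.

Lemma in_sec (F : finFieldType) (h2 : 2 = 0 :> F) (a x : 'rV[F]_5) :
  co a 4 = 1 -> x \in section a -> [/\ x != 0, Qf x = 0 & co x 4 = L a x].
Proof. by move=> ha; rewrite (secE h2) // => /and3P[? /eqP ? /eqP ?]. Qed.

Lemma algQ (F : finFieldType) (h2 : 2 = 0 :> F) (m y1 y2 p : 'rV[F]_5) (k : F) :
  co y2 0 = co y1 0 + k * co p 0 -> co y2 1 = co y1 1 + k * co p 1 ->
  co y2 2 = co y1 2 + k * co p 2 -> co y2 3 = co y1 3 + k * co p 3 ->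
  co y1 4 = L m y1 -> co y2 4 = L m y2 -> Qf y1 = 0 -> Qf y2 = 0 ->
  k ^+ 2 * (co p 0 * co p 1 + co p 2 * co p 3 + L m p ^+ 2) +
  k * (co y1 0 * co p 1 + co y1 1 * co p 0 + co y1 2 * co p 3 + co y1 3 * co p 2) = 0.
Proof.
move=> r0 r1 r2 r3 e1 e2 q1 q2.
move: q1 q2; rewrite !QfE e1 e2 /L r0 r1 r2 r3 => q1 q2.
have e : (co y1 0 + k * co p 0) * (co y1 1 + k * co p 1) +
     (co y1 2 + k * co p 2) * (co y1 3 + k * co p 3) +
     (co m 0 * (co y1 0 + k * co p 0) + co m 1 * (co y1 1 + k * co p 1) +
      co m 2 * (co y1 2 + k * co p 2) + co m 3 * (co y1 3 + k * co p 3)) ^+ 2 +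
     (co y1 0 * co y1 1 + co y1 2 * co y1 3 +
      (co m 0 * co y1 0 + co m 1 * co y1 1 + co m 2 * co y1 2 + co m 3 * co y1 3) ^+ 2) = 0.
  by rewrite q1 q2 addr0.
apply: (etrans _ e); apply/(eq2 h2).
pose lu := co m 0 * co y1 0 + co m 1 * co y1 1 + co m 2 * co y1 2 + co m 3 * co y1 3.
pose lp := co m 0 * co p 0 + co m 1 * co p 1 + co m 2 * co p 2 + co m 3 * co p 3.
apply: (@c2W _ h2 (k ^+ 2 * (co p 0 * co p 1 + co p 2 * co p 3 + lp ^+ 2) +
  k * (co y1 0 * co p 1 + co y1 1 * co p 0 + co y1 2 * co p 3 + co y1 3 * co p 2) +
  (co y1 0 * co y1 1 + co y1 2 * co y1 3 + lu ^+ 2) + k * lu * lp)).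
rewrite /lu /lp /L; ring.
Qed.

Lemma coeq (F : finFieldType) (x y : 'rV[F]_5) i : x = y -> co x i = co y i.
Proof. by move=> ->. Qed.

Lemma rosette (F : finFieldType) (h2 : 2 = 0 :> F)
  (hsq : forall z : F, exists s, s ^+ 2 = z) (a1 a2 a3 m p r1 r2 r3 : 'rV[F]_5) :
  co a1 4 = 1 -> co a2 4 = 1 -> co a3 4 = 1 -> co m 4 = 1 ->
  section a1 != section a2 -> section a1 != section a3 -> section a2 != section a3 ->
  section a1 :&: section a2 = ppoint p -> section a1 :&: section a3 = ppoint p ->
  section a1 != section m -> section a2 != section m -> section a3 != section m ->
  section a1 :&: section m = ppoint r1 -> section a2 :&: section m = ppoint r2 ->
  section a3 :&: section m = ppoint r3 ->
  p \in section a1 -> p \in section m.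
Proof.
move=> h1 h2' h3 hm d12 d13 d23 i12 i13 d1m d2m d3m i1m i2m i3m pa1.
have [pn0 qp pa] := in_sec h2 h1 pa1.
have getm a r : co a 4 = 1 -> section a != section m -> section a :&: section m = ppoint r ->
    [/\ yv a m != 0, Qf (yv a m) = 0 & co (yv a m) 4 = L m (yv a m)].
  move=> ha dam iam; have := tangent_pt h2 hsq ha hm dam iam.
  by rewrite inE => /andP[_ /(in_sec h2 hm)].
have getp a : co a 4 = 1 -> section a1 != section a -> section a1 :&: section a = ppoint p ->
    exists2 k, k != 0 & yv a1 a = k *: p.
  move=> ha d ia; have := tangent_pt h2 hsq h1 ha d ia.
  rewrite ia ppointE => /andP[wn0 /existsP[k /eqP wk]].
  exists k => //; apply/negP => /eqP k0; move: wn0; by rewrite wk k0 scale0r eqxx.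
have [k12 k12n0 w12] := getp a2 h2' d12 i12.
have [k13 k13n0 w13] := getp a3 h3 d13 i13.
have [_ q1 e1] := getm a1 r1 h1 d1m i1m.
have [_ q2 e2] := getm a2 r2 h2' d2m i2m.
have [_ q3 e3] := getm a3 r3 h3 d3m i3m.
have [y10 y11 y12 y13 _] := yvE a1 m.
have rel a k : yv a1 a = k *: p ->
   [/\ co (yv a m) 0 = co (yv a1 m) 0 + k * co p 0, co (yv a m) 1 = co (yv a1 m) 1 + k * co p 1,
       co (yv a m) 2 = co (yv a1 m) 2 + k * co p 2 & co (yv a m) 3 = co (yv a1 m) 3 + k * co p 3].
  move=> w; have [z0 z1 z2 z3 _] := yvE a m; have [w0 w1 w2 w3 _] := yvE a1 a.
  have c j : co (yv a1 a) j = k * co p j by rewrite (coeq j w) coZ.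
  by split; apply/(eq2 h2); rewrite ?z0 ?z1 ?z2 ?z3 ?y10 ?y11 ?y12 ?y13 -c ?w0 ?w1 ?w2 ?w3;
    ring: h2.
have [r20 r21 r22 r23] := rel a2 k12 w12.
have [r30 r31 r32 r33] := rel a3 k13 w13.
have E12 := algQ h2 r20 r21 r22 r23 e1 e2 q1 q2.
have E13 := algQ h2 r30 r31 r32 r33 e1 e3 q1 q3.
set Qm := (co p 0 * co p 1 + _ + _) in E12 E13.
set B := (co (yv a1 m) 0 * co p 1 + _ + _ + _) in E12 E13.
have f k : k != 0 -> k ^+ 2 * Qm + k * B = 0 -> k * Qm + B = 0.
  move=> kn0 e; have : k * (k * Qm + B) = 0 by rewrite -e; ring.
  by move/eqP; rewrite mulf_eq0 (negbTE kn0) /= => /eqP.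
have F12 := f _ k12n0 E12; have F13 := f _ k13n0 E13.
have k1213 : k12 != k13.
  apply/negP => /eqP ek; move/negP: d23; apply; apply/eqP; congr section.
  have w : yv a1 a2 = yv a1 a3 by rewrite w12 w13 ek.
  have [u0 u1 u2 u3 _] := yvE a1 a2; have [v0 v1 v2 v3 _] := yvE a1 a3.
  apply: eq5.
  - by have := coeq 1 w; rewrite u1 v1 => /addrI.
  - by have := coeq 0 w; rewrite u0 v0 => /addrI.
  - by have := coeq 3 w; rewrite u3 v3 => /addrI.
  - by have := coeq 2 w; rewrite u2 v2 => /addrI.
  - by rewrite h2' h3.
have Qm0 : Qm = 0.
  have e : (k12 - k13) * Qm = (k12 * Qm + B) - (k13 * Qm + B) by ring.
  move: e; rewrite F12 F13 subr0 => /eqP; rewrite mulf_eq0 subr_eq0 (negbTE k1213) /=.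
  by move/eqP.
have B0 : B = 0 by move: F12; rewrite Qm0 mulr0 add0r.
have B' : L a1 p + L m p = 0.
  by rewrite -B0 /B y10 y11 y12 y13 /L; ring.
rewrite (secE h2) // pn0 qp eqxx /= pa; apply/eqP; exact/(eq2 h2).
Qed.

Lemma ppoint_eq (F : finFieldType) (p r : 'rV[F]_5) : p \in ppoint r -> ppoint p = ppoint r.
Proof.
rewrite ppointE => /andP[pn0 /existsP[k /eqP pk]].
have kn0 : k != 0 by apply/negP => /eqP k0; move: pn0; rewrite pk k0 scale0r eqxx.
apply/setP => x; rewrite !ppointE; case: (x != 0) => //=.
apply/existsP/existsP => -[j /eqP ->].
- by exists (j * k); rewrite pk scalerA.
- by exists (j / k); rewrite pk scalerA divfK.
Qed.

Lemma ppoint_self (F : finFieldType) (p : 'rV[F]_5) : p != 0 -> p \in ppoint p.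
Proof. by move=> pn0; rewrite ppointE pn0; apply/existsP; exists 1; rewrite scale1r. Qed.

Lemma three (T : finType) (A : {set T}) : (2 < #|A|)%N ->
  exists X1 X2 X3, [/\ X1 \in A, X2 \in A & X3 \in A] /\ [/\ X1 != X2, X1 != X3 & X2 != X3].
Proof.
move=> hA; have /card_gt0P[x1 h1] : (0 < #|A|)%N by apply: leq_ltn_trans hA.
have hA1 : (1 < #|A :\ x1|)%N by move: hA; rewrite (cardsD1 x1) h1.
have /card_gt0P[x2 h2] : (0 < #|A :\ x1|)%N by apply: leq_ltn_trans hA1.
have hA2 : (0 < #|A :\ x1 :\ x2|)%N by move: hA1; rewrite (cardsD1 x2) h2.
have /card_gt0P[x3 h3] := hA2.
move: h2 h3; rewrite !in_setD1 => /andP[n21 i2] /and3P[n32 n31 i3].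
by exists x1, x2, x3; rewrite h1 i2 i3 ![x1 == _]eq_sym n21 n31 eq_sym n32.
Qed.

Lemma strong (F : finFieldType) (n : nat) (hq : #|F| = (2 ^ n)%N)
  (C : {set {set 'rV[F]_5}}) (X1 X2 X3 : {set 'rV[F]_5}) (p : 'rV[F]_5) :
  clique C -> X1 \in C -> X2 \in C -> X3 \in C -> X1 != X2 -> X1 != X3 -> X2 != X3 ->
  p != 0 -> X1 :&: X2 = ppoint p -> X1 :&: X3 = ppoint p -> linear_clique C.
Proof.
move=> hC c1 c2 c3 d12 d13 d23 pn0 i12 i13.
have h2 := char2 hq; have hsq := sqrt_ex hq.
have pp := ppoint_self pn0.
have pX1 : p \in X1 by move: pp; rewrite -i12 inE => /andP[].
have pX2 : p \in X2 by move: pp; rewrite -i12 inE => /andP[_].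
have pX3 : p \in X3 by move: pp; rewrite -i13 inE => /andP[_].
have pin Y : Y \in C -> p \in Y.
  move=> cY.
  case: (eqVneq Y X1) => [-> //|n1]; case: (eqVneq Y X2) => [-> //|n2].
  case: (eqVneq Y X3) => [-> //|n3].
  have [a1 [h1 e1]] := norm_ov h2 hsq (hC.1 _ c1).
  have [a2 [h2' e2]] := norm_ov h2 hsq (hC.1 _ c2).
  have [a3 [h3 e3]] := norm_ov h2 hsq (hC.1 _ c3).
  have [m [hm em]] := norm_ov h2 hsq (hC.1 _ cY).
  have [_ [r1 [_ t1]]] := hC.2 _ _ c1 cY ltac:(by rewrite eq_sym).
  have [_ [r2 [_ t2]]] := hC.2 _ _ c2 cY ltac:(by rewrite eq_sym).
  have [_ [r3 [_ t3]]] := hC.2 _ _ c3 cY ltac:(by rewrite eq_sym).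
  subst X1 X2 X3 Y.
  apply: (rosette h2 hsq h1 h2' h3 hm d12 d13 d23 i12 i13 _ _ _ t1 t2 t3 pX1).
  - by rewrite eq_sym.
  - by rewrite eq_sym.
  - by rewrite eq_sym.
split => //; exists p; split => // X Y cX cY nXY.
have [_ [r [_ t]]] := hC.2 _ _ cX cY nXY.
rewrite t; symmetry; apply: ppoint_eq; by rewrite -t inE !pin.
Qed.

Theorem proposition3p2 (F : finFieldType) (n : nat) (hq : #|F| = (2 ^ n)%N) :
  (forall C : {set {set 'rV[F]_5}},
     clique C -> (4 <= #|C|)%N ->
     (exists T : {set {set 'rV[F]_5}}, [/\ T \subset C, #|T| = 3%N & linear_clique T]) ->
     linear_clique C) /\
  (forall C1 C2 : {set {set 'rV[F]_5}},
     linear_clique C1 -> clique C2 -> ~ linear_clique C2 ->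
     (#|C1 :&: C2| <= 2)%N).
Proof.
split.
- move=> C hC _ [T [sTC cT [_ [p [pn0 hp]]]]].
  have [X1 [X2 [X3 [[t1 t2 t3] [d12 d13 d23]]]]] : exists X1 X2 X3,
    [/\ X1 \in T, X2 \in T & X3 \in T] /\ [/\ X1 != X2, X1 != X3 & X2 != X3].
    by apply: three; rewrite cT.
  apply: (strong hq hC (subsetP sTC _ t1) (subsetP sTC _ t2) (subsetP sTC _ t3)
     d12 d13 d23 pn0 (hp _ _ t1 t2 d12) (hp _ _ t1 t3 d13)).
- move=> C1 C2 [_ [p [pn0 hp]]] hC2 nl; rewrite leqNgt; apply/negP => h3.
  have [X1 [X2 [X3 [[t1 t2 t3] [d12 d13 d23]]]]] := three h3.
  move: t1 t2 t3; rewrite !inE => /andP[a1 b1] /andP[a2 b2] /andP[a3 b3].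
  apply: nl; exact: (strong hq hC2 b1 b2 b3 d12 d13 d23 pn0 (hp _ _ a1 a2 d12) (hp _ _ a1 a3 d13)).
Qed.
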